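(* Let $\mathbf{s}$ be an automatic sequence for which there is a constant $c$ such that every prefix of $\mathbf{s}$ has a string attractor of size at most $c$. Then the functions $f(n):=\mathrm{maxspan}(\mathbf{s}[0..n-1])$ and $g(n):=\mathrm{minspan}(\mathbf{s}[0..n-1])$ are synchronized: there is a finite automaton recognizing the (parallel, padded) representations of the pairs $(n,f(n))$, and one recognizing the representations of the pairs $(n,g(n))$, in the numeration system of $\mathbf{s}$.
   Context: A numeration system represents each natural number uniquely as a word over a finite alphabet; it is regular if the set of representations is regular and the relation $z=x+y$ is recognizable by a finite automaton reading representations in parallel. A sequence $\mathbf{s}=(s_n)_{n\ge0}$ is automatic if there is a regular numeration system and a finite automaton that on input the representation of $n$ outputs $s_n$. A string attractor of a finite word $w=w[0..n-1]$ is a set $S\subseteq\{0,\ldots,n-1\}$ such that every nonempty factor of $w$ has an occurrence $w[p..q]$ with $p\le i\le q$ for some $i\in S$. The span of a finite set $S=\{i_1<\cdots<i_k\}$ is $i_k-i_1$. For a finite word $x$, $\mathrm{maxspan}(x)$ and $\mathrm{minspan}(x)$ are the maximum and minimum span among all string attractors of $x$ of minimum cardinality. *)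

(* Defs.v *)
From mathcomp Require Import all_boot.
Set Implicit Arguments. Unset Strict Implicit. Unset Printing Implicit Defensive.

Definition regular (A : finType) (L : seq A -> Prop) : Prop :=
  exists (Q : finType) (q0 : Q) (d : Q -> A -> Q) (F : {set Q}),
    forall w : seq A, foldl d q0 w \in F <-> L w.

Definition lpad (T : Type) (x : T) (m : nat) (w : seq T) : seq T :=
  nseq (m - size w) x ++ w.

(* Words are padded on the left (most significant end) with a fresh padding
   symbol [None] to a common length and read in parallel. *)
Definition pad2 (S : Type) (u v : seq S) : seq (option S * option S) :=
  let m := maxn (size u) (size v) in
  zip (lpad None m (map Some u)) (lpad None m (map Some v)).

Definition pad3 (S : Type) (u v w : seq S)
  : seq (option S * option S * option S) :=
  let m := maxn (size u) (maxn (size v) (size w)) in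
  zip (zip (lpad None m (map Some u)) (lpad None m (map Some v)))
      (lpad None m (map Some w)).

Definition numeration_system (Sigma : finType) (rep : nat -> seq Sigma) : Prop :=
  injective rep.

Definition regular_numeration_system (Sigma : finType) (rep : nat -> seq Sigma)
  : Prop :=
  [/\ numeration_system rep,
      regular (fun w : seq Sigma => exists n, w = rep n)
    & regular (fun t => exists x y z, t = pad3 (rep x) (rep y) (rep z)
                                       /\ z = x + y)].

Definition automatic_wrt (Sigma Delta : finType) (rep : nat -> seq Sigma)
  (s : nat -> Delta) : Prop :=
  exists (Q : finType) (q0 : Q) (d : Q -> Sigma -> Q) (out : Q -> Delta),
    forall n, s n = out (foldl d q0 (rep n)).

Definition synchronized (Sigma : finType) (rep : nat -> seq Sigma)
  (f : nat -> nat) : Prop :=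
  regular (fun t => exists n, t = pad2 (rep n) (rep (f n))).

(* the factor w[p..q] (inclusive) *)
Definition factor (T : Type) (w : seq T) (p q : nat) : seq T :=
  take (q - p).+1 (drop p w).

Definition attractor (T : eqType) (w : seq T) (S : {set 'I_(size w)}) : bool :=
  [forall p : 'I_(size w), forall q : 'I_(size w), (p <= q) ==>
    [exists p' : 'I_(size w), exists q' : 'I_(size w),
      [&& p' <= q', factor w p' q' == factor w p q &
          [exists i in S, (p' <= i) && (i <= q')]]]].
Arguments attractor {T} w S.

(* span of a finite set of positions: max - min (0 for the empty set) *)
Definition span (n : nat) (S : {set 'I_n}) : nat :=
  (\max_(i in S) val i) - \big[minn/n]_(i in S) val i.

(* minimum cardinality of a string attractor of w (the full set of positions
   is always an attractor, so the default value size w is harmless) *)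
Definition min_attr_card (T : eqType) (w : seq T) : nat :=
  \big[minn/size w]_(S : {set 'I_(size w)} | attractor w S) #|S|.

Definition min_attractor (T : eqType) (w : seq T) (S : {set 'I_(size w)}) : bool :=
  attractor w S && (#|S| == min_attr_card w).
Arguments min_attractor {T} w S.

Definition maxspan (T : eqType) (w : seq T) : nat :=
  \max_(S : {set 'I_(size w)} | min_attractor w S) span S.

Definition minspan (T : eqType) (w : seq T) : nat :=
  \big[minn/size w]_(S : {set 'I_(size w)} | min_attractor w S) span S.

Definition seq_prefix (T : Type) (s : nat -> T) (n : nat) : seq T := mkseq s n.

(* Main.v *)
Require Import Defs.
From mathcomp Require Import all_boot.
From mathcomp Require Import zify.
From Stdlib Require Import Classical FunctionalExtensionality.
Set Implicit Arguments. Unset Strict Implicit. Unset Printing Implicit Defensive.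

Section Reg.

Lemma regular_ext (A : finType) (L L' : seq A -> Prop) :
  (forall w, L w <-> L' w) -> regular L -> regular L'.
Proof.
move=> H [Q [q0 [d [F HF]]]]; exists Q, q0, d, F => w; rewrite -H; exact: HF.
Qed.

Lemma regular_preim (A B : finType) (h : B -> A) (L : seq A -> Prop) :
  regular L -> regular (fun w => L (map h w)).
Proof.
move=> [Q [q0 [d [F HF]]]]; exists Q, q0, (fun q b => d q (h b)), F => w.
rewrite -HF; suff -> : forall q, foldl (fun q b => d q (h b)) q w = foldl d q (map h w) by [].
by elim: w => //= b w IH q; rewrite IH.
Qed.

Lemma regular_not (A : finType) (L : seq A -> Prop) :
  regular L -> regular (fun w => ~ L w).
Proof.
move=> [Q [q0 [d [F HF]]]]; exists Q, q0, d, (~: F) => w.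
rewrite inE -HF; split; [by move/negP | by move/negP].
Qed.

Lemma regular_and (A : finType) (L1 L2 : seq A -> Prop) :
  regular L1 -> regular L2 -> regular (fun w => L1 w /\ L2 w).
Proof.
move=> [Q1 [q1 [d1 [F1 H1]]]] [Q2 [q2 [d2 [F2 H2]]]].
exists (Q1 * Q2)%type, (q1, q2), (fun q a => (d1 q.1 a, d2 q.2 a)),
  [set q | (q.1 \in F1) && (q.2 \in F2)] => w.
have E : forall p, foldl (fun q a => (d1 q.1 a, d2 q.2 a)) p w =
   (foldl d1 p.1 w, foldl d2 p.2 w).
  by elim: w => [[]|a w IH] //= p; rewrite IH.
rewrite E inE /= -H1 -H2; split; [by case/andP | by case=> -> ->].
Qed.

Lemma regular_or (A : finType) (L1 L2 : seq A -> Prop) :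
  regular L1 -> regular L2 -> regular (fun w => L1 w \/ L2 w).
Proof.
move=> [Q1 [q1 [d1 [F1 H1]]]] [Q2 [q2 [d2 [F2 H2]]]].
exists (Q1 * Q2)%type, (q1, q2), (fun q a => (d1 q.1 a, d2 q.2 a)),
  [set q | (q.1 \in F1) || (q.2 \in F2)] => w.
have E : forall p, foldl (fun q a => (d1 q.1 a, d2 q.2 a)) p w =
   (foldl d1 p.1 w, foldl d2 p.2 w).
  by elim: w => [[]|a w IH] //= p; rewrite IH.
rewrite E inE /= -H1 -H2; split; [by case/orP; auto | by case=> ->; rewrite ?orbT].
Qed.

Lemma regular_true (A : finType) : regular (fun _ : seq A => True).
Proof. by exists unit, tt, (fun _ _ => tt), setT => w; rewrite inE. Qed.

Lemma regular_false (A : finType) : regular (fun _ : seq A => False).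
Proof. by exists unit, tt, (fun _ _ => tt), set0 => w; rewrite inE. Qed.

Lemma regular_all (A I : finType) (L : I -> seq A -> Prop) :
  (forall i, regular (L i)) -> regular (fun w => forall i, L i w).
Proof.
move=> HL.
suff : forall l : seq I, regular (fun w => forall i, i \in l -> L i w).
  move/(_ (enum I)); apply: regular_ext => w; split => H i; last by move=> _; exact: H.
  by apply: H; rewrite mem_enum.
elim=> [|i l IH].
  by apply: regular_ext (regular_true A) => w; split.
apply: regular_ext (regular_and (HL i) IH) => w; split.
  by case=> H1 H2 j; rewrite inE => /orP[/eqP->|]; auto.
by move=> H; split => [|j jl]; apply: H; rewrite inE ?eqxx ?jl ?orbT.
Qed.

Lemma set_of_prop (T : finType) (P : T -> Prop) :
  exists S : {set T}, forall x, x \in S <-> P x.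
Proof.
suff : forall l : seq T, exists S : {set T}, forall x, x \in l -> (x \in S <-> P x).
  by case/(_ (enum T)) => S HS; exists S => x; apply: HS; rewrite mem_enum.
elim=> [|a l [S HS]]; first by exists set0.
case: (classic (P a)) => Pa.
  exists (a |: S) => x; rewrite !inE => /orP[/eqP->|xl]; first by rewrite eqxx.
  case: eqP => [->|_] /=; first by split.
  exact: HS.
exists (S :\ a) => x; rewrite !inE => /orP[/eqP->|xl]; first by rewrite eqxx.
case: eqP => [->|_] /=; first by split.
exact: HS.
Qed.

Definition istep (A B Q : finType) (d : Q -> A -> Q) (h : A -> B) (S : {set Q}) (b : B)
  : {set Q} := [set q' | [exists q in S, [exists a, (h a == b) && (d q a == q')]]].

Lemma istep_foldl (A B Q : finType) (d : Q -> A -> Q) (h : A -> B) v S q' :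
  q' \in foldl (istep d h) S v <->
  exists q w, [/\ q \in S, map h w = v & foldl d q w = q'].
Proof.
elim: v S => [|b v IH] S /=.
  split; first by move=> H; exists q', [::].
  by case=> q [[|a w] [Hq Hw <-]] //.
rewrite IH; split.
  case=> q1 [w [Hq1 Hw Hf]].
  move: Hq1; rewrite inE => /existsP[q /andP[Hq /existsP[a /andP[/eqP Ha /eqP Hd]]]].
  by exists q, (a :: w); split => //=; [rewrite Ha Hw | rewrite Hd].
case=> q [[|a w] [Hq //= [Ha Hw] Hf]].
exists (d q a), w; split => //.
by rewrite inE; apply/existsP; exists q; rewrite Hq; apply/existsP; exists a; rewrite Ha !eqxx.
Qed.

Lemma regular_image (A B : finType) (h : A -> B) (L : seq A -> Prop) :
  regular L -> regular (fun v => exists w, L w /\ v = map h w).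
Proof.
move=> [Q [q0 [d [F HF]]]].
exists {set Q}, [set q0], (istep d h), [set S : {set Q} | [exists q in S, q \in F]] => v.
rewrite inE; split.
  case/existsP=> q' /andP[/istep_foldl [q [w [Hq Hw Hf]]] Hq'].
  by exists w; split => //; apply/HF; move: Hq; rewrite inE => /eqP <-; rewrite Hf.
case=> w [/HF Hw ->]; apply/existsP; exists (foldl d q0 w); rewrite Hw andbT.
by apply/istep_foldl; exists q0, w; rewrite inE eqxx.
Qed.

Lemma regular_quot (A : finType) (a : A) (L : seq A -> Prop) :
  regular L -> regular (fun w => exists j, L (nseq j a ++ w)).
Proof.
move=> [Q [q0 [d [F HF]]]].
have [R HR] := set_of_prop (fun q => exists j, foldl d q0 (nseq j a) = q).
exists {set Q}, R, (istep d id), [set S : {set Q} | [exists q in S, q \in F]] => w.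
rewrite inE; split.
  case/existsP=> q' /andP[/istep_foldl [q [u [Hq Hu Hf]]] Hq'].
  move: Hq => /HR [j Hj]; exists j; apply/HF; rewrite foldl_cat Hj.
  by move: Hu; rewrite map_id => <-; rewrite Hf.
case=> j /HF; rewrite foldl_cat => H; apply/existsP; exists (foldl d (foldl d q0 (nseq j a)) w).
rewrite H andbT; apply/istep_foldl; exists (foldl d q0 (nseq j a)), w; split => //.
  by apply/HR; exists j.
by rewrite map_id.
Qed.

Fixpoint strip (A : eqType) (a : A) (w : seq A) : seq A :=
  if w is b :: w' then (if b == a then strip a w' else w) else [::].

Lemma regular_strip (A : finType) (a : A) (L : seq A -> Prop) :
  regular L -> regular (fun w => L (strip a w)).
Proof.
move=> [Q [q0 [d [F HF]]]].
pose d' (x : option Q) b := if x is Some q then Some (d q b)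
                            else if b == a then None else Some (d q0 b).
exists (option Q), None, d', [set x | if x is Some q then q \in F else q0 \in F] => w.
have ES : forall q u, foldl d' (Some q) u = Some (foldl d q u).
  by move=> q u; elim: u q => //= b u IH q; rewrite IH.
rewrite -HF inE; elim: w => //= b w IH.
by case: eqP => _ //; rewrite ES.
Qed.

Lemma regular_erase (S : finType) (L : seq S -> Prop) :
  regular L -> regular (fun c : seq (option S) => L (pmap id c)).
Proof.
move=> [Q [q0 [d [F HF]]]].
exists Q, q0, (fun q (o : option S) => if o is Some x then d q x else q), F => c.
rewrite -HF; suff -> : forall q, foldl (fun q (o : option S) => if o is Some x then d q x else q) q c
   = foldl d q (pmap id c) by [].
by elim: c => //= [[x|]] c IH q /=; rewrite IH.
Qed.

Fixpoint shapeN (S : Type) (c : seq (option S)) : bool :=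
  if c is o :: c' then (if o is Some _ then all (@isSome S) c' else shapeN c') else true.

Lemma regular_shape (S : finType) : regular (fun c : seq (option S) => shapeN c).
Proof.
pose d (x : option bool) (o : option S) : option bool :=
  match x, o with
  | Some true, None => Some true
  | Some _, Some _ => Some false
  | _, _ => None end.
exists (option bool), (Some true), d, [set Some true; Some false] => c.
have EN : forall u, foldl d None u = None by elim=> //.
have EF : forall u, foldl d (Some false) u = if all (@isSome S) u then Some false else None.
  by elim=> //= [[x|]] u IH //=.
rewrite !inE; elim: c => //= [[x|]] c IH /=; last by [].
by rewrite EF; case: all.
Qed.

End Reg.

Section Enc.
Variable Sigma : finType.
Variable rep : nat -> seq Sigma.
Hypothesis rep_inj : injective rep.
Hypothesis rep_reg : regular (fun u : seq Sigma => exists n, u = rep n).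

Definition alph k := {ffun 'I_k -> option Sigma}.
Definition Nl k : alph k := [ffun => None].
Definition col k (i : 'I_k) (w : seq (alph k)) := map (fun f : alph k => f i) w.
Definition encm k (ef : 'I_k -> nat) := \max_(i < k) size (rep (ef i)).
Definition encf k (ef : 'I_k -> nat) : seq (alph k) :=
  mkseq (fun j => [ffun i => nth None (lpad None (encm ef) (map Some (rep (ef i)))) j])
        (encm ef).
Definition enc k (e : nat -> nat) := encf (fun i : 'I_k => e i).

Lemma size_encf k (ef : 'I_k -> nat) : size (encf ef) = encm ef.
Proof. by rewrite size_mkseq. Qed.

Lemma encm_ge k (ef : 'I_k -> nat) i : size (rep (ef i)) <= encm ef.
Proof. by rewrite /encm; apply: (@leq_bigmax _ (fun i : 'I_k => size (rep (ef i)))). Qed.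

Lemma size_lpad (T : Type) (x : T) m u : size u <= m -> size (lpad x m u) = m.
Proof. by rewrite /lpad size_cat size_nseq => H; rewrite subnK. Qed.

Lemma col_encf k (ef : 'I_k -> nat) i :
  col i (encf ef) = lpad None (encm ef) (map Some (rep (ef i))).
Proof.
set u := lpad _ _ _.
have Hu : size u = encm ef by rewrite size_lpad // size_map encm_ge.
apply: (eq_from_nth (x0 := None)); first by rewrite size_map size_mkseq Hu.
move=> j; rewrite size_map size_mkseq => Hj.
by rewrite (nth_map (Nl k)) ?size_mkseq // nth_mkseq // ffunE.
Qed.

Lemma col_cat k i (u v : seq (alph k)) : col i (u ++ v) = col i u ++ col i v.
Proof. exact: map_cat. Qed.

Lemma col_nseq k i j : col i (nseq j (Nl k)) = nseq j None.
Proof. by rewrite /col map_nseq ffunE. Qed.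

Lemma size_col k i (w : seq (alph k)) : size (col i w) = size w.
Proof. exact: size_map. Qed.

Lemma word_eq k (w1 w2 : seq (alph k)) :
  size w1 = size w2 -> (forall i, col i w1 = col i w2) -> w1 = w2.
Proof.
move=> Hs Hc; apply: (eq_from_nth (x0 := Nl k)) => // j Hj.
apply/ffunP => i; have := congr1 (fun c => nth None c j) (Hc i).
by rewrite /col (nth_map (Nl k)) // (nth_map (Nl k)) // -Hs.
Qed.

Lemma pmap_nseqNone (T : Type) j : pmap id (nseq j (@None T)) = [::].
Proof. by elim: j. Qed.

Lemma pmap_mapSome (T : Type) (u : seq T) : pmap id (map Some u) = u.
Proof. by elim: u => //= a u ->. Qed.

Lemma pmap_lpad (T : Type) m (u : seq T) : pmap id (lpad None m (map Some u)) = u.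
Proof. by rewrite /lpad pmap_cat pmap_nseqNone pmap_mapSome. Qed.

Lemma shapeN_lpad (T : Type) j (u : seq T) : shapeN (nseq j None ++ map Some u).
Proof.
elim: j => //=; case: u => //= a u; elim: u => //=.
Qed.

Lemma shapeN_inv (T : Type) (c : seq (option T)) :
  shapeN c -> c = nseq (size c - size (pmap id c)) None ++ map Some (pmap id c).
Proof.
have AS : forall u : seq (option T), all (@isSome T) u -> u = map Some (pmap id u).
  by elim=> //= [[a|]] u IH //= /IH {1}->.
elim: c => //= [[a|]] c IH /=.
  move=> /AS Hc; have Hsz : size (pmap id c) = size c by rewrite {2}Hc size_map.
  by rewrite /= subSS Hsz subnn /= -Hc.
move=> /IH Hc.
have Hle : size (pmap id c) <= size c by rewrite size_pmap count_size.
by rewrite subSn //= -Hc.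
Qed.

Definition startsN k (w : seq (alph k)) := if w is f :: _ then f == Nl k else false.

Lemma encf_nonstart k (ef : 'I_k -> nat) : ~~ startsN (encf ef).
Proof.
rewrite /encf; case E: (encm ef) => [|m] //=.
have : #|'I_k| > 0.
  case: k ef E => [|k] ef E; last by rewrite card_ord.
  by move: E; rewrite /encm big_ord0.
case/(eq_bigmax (fun i => size (rep (ef i)))) => i Hi.
apply/eqP => /ffunP /(_ i); rewrite !ffunE.
move: Hi; rewrite -/(encm ef) E /lpad size_map => Hi; rewrite -Hi subnn /=.
by case: (rep (ef i)) Hi.
Qed.

Lemma strip_nseq k (u : seq (alph k)) j :
  ~~ startsN u -> strip (Nl k) (nseq j (Nl k) ++ u) = u.
Proof.
elim: j => [|j IH] /=; last by rewrite eqxx.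
by case: u => //= f u; case: eqP.
Qed.

Lemma encf_inj k (ef ef' : 'I_k -> nat) : encf ef = encf ef' -> ef =1 ef'.
Proof.
move=> H i; apply: rep_inj.
have := congr1 (fun w => pmap id (col i w)) H; by rewrite /= !col_encf !pmap_lpad.
Qed.

Lemma enc_inj k e e' : enc k e = enc k e' -> forall i, i < k -> e i = e' i.
Proof. by move=> /encf_inj H i Hi; exact: (H (Ordinal Hi)). Qed.

Lemma enc_ext k e e' : (forall i, i < k -> e i = e' i) -> enc k e = enc k e'.
Proof.
move=> H; rewrite /enc; congr encf; apply: functional_extensionality => i; exact: H.
Qed.

Definition gmap k k' (tau : 'I_k -> 'I_k') (f : alph k') : alph k := [ffun i => f (tau i)].

Lemma col_gmap k k' (tau : 'I_k -> 'I_k') i (w : seq (alph k')) :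
  col i (map (gmap tau) w) = col (tau i) w.
Proof. by rewrite /col -map_comp; apply: eq_map => f /=; rewrite ffunE. Qed.

Lemma map_gmap_enc k k' (sigma : nat -> nat) (tau : 'I_k -> 'I_k')
  (Ht : forall i, val (tau i) = sigma i) e :
  map (gmap tau) (enc k' e) =
  nseq (encm (fun i : 'I_k' => e i) - encm (fun i : 'I_k => e (sigma i))) (Nl k)
   ++ enc k (fun v => e (sigma v)).
Proof.
have Hle : encm (fun i : 'I_k => e (sigma i)) <= encm (fun i : 'I_k' => e i).
  apply/bigmax_leqP => i _; rewrite -Ht; exact: (encm_ge (fun i : 'I_k' => e i) (tau i)).
apply: word_eq.
  by rewrite size_map size_cat size_nseq /enc !size_encf subnK.
move=> i; rewrite col_gmap col_cat col_nseq /enc !col_encf /= -Ht /lpad catA -nseqD.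
congr (nseq _ _ ++ _); rewrite size_map.
have H := encm_ge (fun i : 'I_k => e (sigma i)) i; rewrite /= -Ht /= in H; lia. Qed.

Definition Valid k (w : seq (alph k)) := exists e, w = enc k e.

Lemma regular_headOK k : regular (fun w : seq (alph k) => ~~ startsN w).
Proof.
pose d (x : option bool) (f : alph k) := if x is Some b then Some b else Some (f == Nl k).
exists (option bool), None, d, [set None; Some false] => w.
have E : forall b u, foldl d (Some b) u = Some b by move=> b; elim.
rewrite !inE; case: w => //= f w; rewrite E /=; by case: (f == Nl k).
Qed.

Lemma Valid_char k (w : seq (alph k)) :
  Valid w <-> (forall i, shapeN (col i w) /\ exists n, pmap id (col i w) = rep n)
              /\ ~~ startsN w.
Proof.
split.
  case=> e ->; split; last exact: encf_nonstart.
  by move=> i; rewrite col_encf; split; [exact: shapeN_lpad | exists (e i); rewrite pmap_lpad].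
case=> H Hs.
have [f Hf] := fin_all_exists (fun i => proj2 (H i)).
pose e v := if insub v is Some i then f i else 0.
have He : forall i : 'I_k, e i = f i by move=> i; rewrite /e valK.
have Hc : forall i, col i w = nseq (size w - size (rep (f i))) None ++ map Some (rep (f i)).
  move=> i; have := shapeN_inv (proj1 (H i)); by rewrite Hf size_col.
have Hsz : forall i, size (rep (f i)) <= size w.
  by move=> i; have := congr1 size (Hc i); rewrite size_col size_cat size_map; lia.
have Hm : encm (fun i : 'I_k => e i) = size w.
  apply/eqP; rewrite eqn_leq; apply/andP; split.
    by apply/bigmax_leqP => i _; rewrite He.
  clear H Hf; case: w Hs Hc Hsz => [|a w] //= Hs Hc Hsz.
  have : exists i, a i != None.
    apply/existsP; apply: contraR Hs; rewrite negb_exists => /forallP Ha.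
    by apply/eqP/ffunP => i; rewrite ffunE; move: (Ha i); rewrite negbK => /eqP.
  case=> i Hi; apply: (leq_trans _ (encm_ge _ i)); rewrite He.
  move: (Hc i); case E: ((size w).+1 - size (rep (f i))) => [|j] //=.
    by move=> _; lia.
  by case=> Ha; rewrite Ha in Hi.
exists e; apply: word_eq; first by rewrite /enc size_encf Hm.
move=> i; rewrite /enc col_encf Hm Hc He /lpad size_map //.
Qed.

Lemma regular_Valid k : regular (@Valid k).
Proof.
apply: (regular_ext (fun w => iff_sym (@Valid_char k w))).
apply: regular_and (regular_headOK k).
apply: regular_all => i.
apply: (regular_preim (fun f : alph k => f i) (L := fun c => shapeN c /\ exists n, pmap id c = rep n)).
apply: regular_and; first exact: regular_shape.
exact: regular_erase rep_reg.
Qed.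

End Enc.

Definition upd (e : nat -> nat) (x y : nat) : nat -> nat :=
  fun v => if v == x then y else e v.

Definition respects k (P : (nat -> nat) -> Prop) :=
  forall e e', (forall i, i < k -> e i = e' i) -> P e -> P e'.

Section Def.
Variable Sigma : finType.
Variable rep : nat -> seq Sigma.
Hypothesis rep_inj : injective rep.
Hypothesis rep_reg : regular (fun u : seq Sigma => exists n, u = rep n).

Definition lang k (P : (nat -> nat) -> Prop) :=
  fun w : seq (alph Sigma k) => exists e, w = enc rep k e /\ P e.
Definition definable k P := respects k P /\ regular (@lang k P).

Lemma def_ext k (P Q : (nat -> nat) -> Prop) :
  (forall e, P e <-> Q e) -> definable k P -> definable k Q.
Proof using rep_inj rep_reg.
move=> H [HP HL]; split.
  by move=> e e' He /H /(HP _ _ He) /H.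
by apply: regular_ext HL => w; split; case=> e [-> /H]; exists e.
Qed.

Lemma def_not k P : definable k P -> definable k (fun e => ~ P e).
Proof using rep_inj rep_reg.
move=> [HP HL]; split.
  move=> e e' He HnP HP'; apply: HnP; apply: (HP e') => // i Hi; by rewrite He.
apply: regular_ext (regular_and (regular_Valid rep_reg k) (regular_not HL)).
move=> w; split.
  case=> [[e ->] Hn]; exists e; split => // Pe; apply: Hn; by exists e.
case=> e [-> Hn]; split; first by exists e.
case=> e' [/enc_inj He Pe']; apply: Hn; apply: (HP e') => // i Hi; by rewrite He.
Qed.

Lemma def_and k P Q : definable k P -> definable k Q -> definable k (fun e => P e /\ Q e).
Proof using rep_inj rep_reg.
move=> [HP LP] [HQ LQ]; split.
  by move=> e e' He [/(HP _ _ He) ? /(HQ _ _ He) ?].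
apply: regular_ext (regular_and LP LQ) => w; split.
  case=> [[e [-> Pe]] [e' [/enc_inj He Qe']]]; exists e; split => //; split => //.
  by apply: (HQ e') => // i Hi; rewrite He.
by case=> e [-> [Pe Qe]]; split; exists e.
Qed.

Lemma def_or k P Q : definable k P -> definable k Q -> definable k (fun e => P e \/ Q e).
Proof using rep_inj rep_reg.
move=> [HP LP] [HQ LQ]; split.
  by move=> e e' He [/(HP _ _ He) ?|/(HQ _ _ He) ?]; [left|right].
apply: regular_ext (regular_or LP LQ) => w; split.
  by case=> [[e [-> Pe]]|[e [-> Qe]]]; exists e; split => //; [left|right].
by case=> e [-> [Pe|Qe]]; [left|right]; exists e.
Qed.

Lemma def_false k : definable k (fun _ => False).
Proof using rep_inj rep_reg.
split => //; apply: regular_ext (regular_false _) => w; split => //; by case=> e [].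
Qed.

Lemma def_true k : definable k (fun _ => True).
Proof using rep_inj rep_reg.
split => //; apply: regular_ext (regular_Valid rep_reg k) => w; split.
  by case=> e ->; exists e.
by case=> e [-> _]; exists e.
Qed.

Lemma def_rename k k' P (sigma : nat -> nat) :
  definable k P -> (forall i, i < k -> sigma i < k') ->
  definable k' (fun e => P (fun v => e (sigma v))).
Proof using rep_inj rep_reg.
move=> [HP LP] Hs; split.
  move=> e e' He; apply: HP => i Hi; apply: He; exact: Hs.
pose tau (i : 'I_k) : 'I_k' := Ordinal (Hs i (ltn_ord i)).
have Ht : forall i, val (tau i) = sigma i by [].
apply: regular_ext (regular_and (regular_Valid rep_reg k')
   (regular_preim (gmap tau) (regular_strip (Nl Sigma k) LP))).
move=> w; split.
  case=> [[e ->]]; rewrite (@map_gmap_enc _ rep _ _ _ tau Ht) strip_nseq ?encf_nonstart //.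
  case=> e' [/enc_inj He Pe']; exists e; split => //.
  by apply: (HP e') => // i Hi; rewrite He.
case=> e [-> Pe]; split; first by exists e.
rewrite (@map_gmap_enc _ rep _ _ _ tau Ht) strip_nseq ?encf_nonstart //.
by exists (fun v => e (sigma v)).
Qed.

Lemma def_mono k k' P : definable k P -> k <= k' -> definable k' P.
Proof using rep_inj rep_reg.
move=> HP Hk; have := def_rename (sigma := id) HP (fun i Hi => leq_trans Hi Hk).
by apply: def_ext => e.
Qed.

Lemma def_ex k P : definable k.+1 P -> definable k (fun e => exists y, P (upd e k y)).
Proof using rep_inj rep_reg.
move=> [HP LP]; split.
  move=> e e' He [y Py]; exists y; apply: (HP _ _ _ Py) => i Hi.
  rewrite /upd; case: eqP => // Hik; apply: He; lia.
pose tau (i : 'I_k) : 'I_k.+1 := widen_ord (leqnSn k) i.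
have Ht : forall i, val (tau i) = id i by [].
apply: regular_ext (regular_and (regular_Valid rep_reg k)
   (regular_quot (Nl Sigma k) (regular_image (gmap tau) LP))).
move=> w; split.
  case=> [[e ->] [j [u [[e' [-> Pe']] Hu]]]].
  have Hw : enc rep k e = enc rep k e'.
    have := congr1 (strip (Nl Sigma k)) Hu.
    rewrite (@map_gmap_enc _ rep _ _ id tau Ht) !strip_nseq ?encf_nonstart //.
  exists e; split => //; exists (e' k); apply: (HP e') => // i Hi.
  rewrite /upd; case: eqP => [->//|Hik]; apply: esym; apply: (enc_inj rep_inj Hw); lia.
case=> e [-> [y Py]]; split; first by exists e.
have := @map_gmap_enc _ rep _ _ id tau Ht (upd e k y).
rewrite (@enc_ext _ rep k (fun v => upd e k y (id v)) e).
  by move=> H; eexists; exists (enc rep k.+1 (upd e k y)); split; [exists (upd e k y)| exact: esym H].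
by move=> i Hi; rewrite /upd /=; case: eqP => // ?; lia.
Qed.

Lemma def_shrink m k P : definable (k + m) P -> respects k P -> definable k P.
Proof using rep_inj rep_reg.
elim: m => [|m IH]; first by rewrite addn0.
move=> HD HP; apply: IH => //.
rewrite addnS in HD; apply: def_ext (def_ex HD) => e; split.
  case=> y; apply: HP => i Hi; rewrite /upd; case: eqP => // ?; lia.
by move=> Pe; exists 0; apply: (HP e) => // i Hi; rewrite /upd; case: eqP => // ?; lia.
Qed.

Lemma def_exfin k (T : finType) (P : T -> (nat -> nat) -> Prop) :
  (forall a, definable k (P a)) -> definable k (fun e => exists a, P a e).
Proof using rep_inj rep_reg.
move=> HP.
suff : forall l : seq T, definable k (fun e => exists2 a, a \in l & P a e).
  move/(_ (enum T)); apply: def_ext => e; split; first by case=> a _ Pa; exists a.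
  by case=> a Pa; exists a; rewrite ?mem_enum.
elim=> [|a l IH].
  by apply: def_ext (def_false k) => e; split => // -[].
apply: def_ext (def_or (HP a) IH) => e; split.
  by case=> [Pa|[b Hb Pb]]; [exists a; rewrite ?inE ?eqxx | exists b; rewrite // inE Hb orbT].
by case=> b; rewrite inE => /orP[/eqP->|Hb] Pb; [left | right; exists b].
Qed.

End Def.

Section Atoms.
Variable Sigma Delta : finType.
Variable rep : nat -> seq Sigma.
Variable s : nat -> Delta.
Hypothesis rep_inj : injective rep.
Hypothesis rep_reg : regular (fun u : seq Sigma => exists n, u = rep n).
Hypothesis add_reg : regular (fun t => exists x y z, t = pad3 (rep x) (rep y) (rep z)
                                       /\ z = x + y).
Hypothesis s_auto : automatic_wrt rep s.

Notation definable := (definable rep).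
Local Notation def_ext := (@def_ext _ rep rep_inj rep_reg).
Local Notation def_not := (@def_not _ rep rep_inj rep_reg).
Local Notation def_and := (@def_and _ rep rep_inj rep_reg).
Local Notation def_or := (@def_or _ rep rep_inj rep_reg).
Local Notation def_false := (@def_false _ rep rep_inj rep_reg).
Local Notation def_true := (@def_true _ rep rep_inj rep_reg).
Local Notation def_rename := (@def_rename _ rep rep_inj rep_reg).
Local Notation def_mono := (@def_mono _ rep rep_inj rep_reg).
Local Notation def_ex := (@def_ex _ rep rep_inj rep_reg).
Local Notation def_exfin := (@def_exfin _ rep rep_inj rep_reg).

Definition o30 : 'I_3 := @Ordinal 3 0 isT.
Definition o31 : 'I_3 := @Ordinal 3 1 isT.
Definition o32 : 'I_3 := @Ordinal 3 2 isT.
Definition g3 (f : alph Sigma 3) := (f o30, f o31, f o32).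

Lemma g3_inj : injective g3.
Proof.
move=> f f' [H0 H1 H2]; apply/ffunP => -[[|[|[|j]]] Hj] //.
- by have -> : Ordinal Hj = o30 by apply: val_inj.
- by have -> : Ordinal Hj = o31 by apply: val_inj.
- by have -> : Ordinal Hj = o32 by apply: val_inj.
Qed.

Lemma map_g3_enc e : map g3 (enc rep 3 e) = pad3 (rep (e 0)) (rep (e 1)) (rep (e 2)).
Proof.
have -> : map g3 (enc rep 3 e) =
  zip (zip (col o30 (enc rep 3 e)) (col o31 (enc rep 3 e))) (col o32 (enc rep 3 e)).
  by rewrite /col !zip_map.
rewrite /enc !col_encf /pad3 /=.
have -> : encm rep (fun i : 'I_3 => e i) =
  maxn (size (rep (e 0))) (maxn (size (rep (e 1))) (size (rep (e 2)))).
  by rewrite /encm !big_ord_recl big_ord0 maxn0.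
by [].
Qed.

Lemma def_add : definable 3 (fun e => e 0 + e 1 = e 2).
Proof.
split.
  by move=> e e' H; rewrite !H.
apply: regular_ext (regular_preim g3 add_reg) => w; split.
  case=> x [y [z [Hw Hz]]].
  pose e v := nth 0 [:: x; y; z] v.
  exists e; split; last by rewrite /e /= Hz.
  by apply: (inj_map g3_inj); rewrite Hw map_g3_enc.
by case=> e [-> He]; exists (e 0), (e 1), (e 2); rewrite map_g3_enc He.
Qed.

Definition g1 (f : alph Sigma 1) := f ord0.

Lemma g1_inj : injective g1.
Proof. by move=> f f' H; apply/ffunP => i; rewrite ord1. Qed.

Lemma map_g1_enc e : map g1 (enc rep 1 e) = map Some (rep (e 0)).
Proof.
have -> : map g1 (enc rep 1 e) = col ord0 (enc rep 1 e) by [].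
rewrite /enc col_encf.
have -> : encm rep (fun i : 'I_1 => e i) = size (rep (e 0)).
  by rewrite /encm big_ord_recl big_ord0 maxn0.
by rewrite /lpad size_map subnn.
Qed.

Lemma def_letter (a : Delta) : definable 1 (fun e => s (e 0) = a).
Proof.
split.
  by move=> e e' H; rewrite !H.
have Ra : regular (fun u => exists n, u = rep n /\ s n = a).
  case: s_auto => Q [q0 [d [out Hs]]].
  have Ro : regular (fun u : seq Sigma => foldl d q0 u \in [set q | out q == a]).
    by exists Q, q0, d, [set q | out q == a].
  apply: regular_ext (regular_and rep_reg Ro) => u; split.
    by case=> [[n ->]]; rewrite inE => /eqP Ho; exists n; rewrite Hs.
  by case=> n [-> <-]; split; [exists n | rewrite inE Hs].
apply: regular_ext (regular_preim g1 (regular_image Some Ra)) => w; split.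
  case=> u [[n [-> Hn]] Hw].
  exists (fun _ => n); split => //.
  by apply: (inj_map g1_inj); rewrite Hw map_g1_enc.
by case=> e [-> He]; exists (rep (e 0)); rewrite map_g1_enc; split => //; exists (e 0).
Qed.

Lemma def_same : definable 2 (fun e => s (e 0) = s (e 1)).
Proof.
have H : forall a : Delta, definable 2 (fun e => s (e 0) = a /\ s (e 1) = a).
  move=> a; apply: def_and.
    apply: (def_rename (sigma := fun _ => 0) (def_letter a)) => //.
  apply: (def_rename (sigma := fun _ => 1) (def_letter a)) => //.
apply: def_ext (def_exfin H) => e; split; first by case=> a [-> ->].
by move=> H'; exists (s (e 0)).
Qed.

Lemma def_le : definable 2 (fun e => e 0 <= e 1).
Proof.
have H := def_rename (sigma := fun v => nth 0 [:: 0; 2; 1] v) def_add.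
have H' := def_ex (H 3 _).
apply: def_ext (H' _) => [e|]; last by case=> [|[|[|]]].
rewrite /upd /=; split; first by case=> y <-; rewrite leq_addr.
by move=> Hle; exists (e 1 - e 0); lia.
Qed.

Lemma def_lt : definable 2 (fun e => e 0 < e 1).
Proof.
have Hs : forall i, i < 2 -> nth 0 [:: 1; 0] i < 2 by case=> [|[|]].
have H := def_not (def_rename (sigma := fun v => nth 0 [:: 1; 0] v) def_le Hs).
apply: def_ext H => e.
rewrite /=; split; first by move/negP; rewrite -ltnNge.
by move=> Hlt Hle; move: Hlt; rewrite ltnNge Hle.
Qed.

Lemma def_eq : definable 2 (fun e => e 0 = e 1).
Proof.
have Hs : forall i, i < 2 -> nth 0 [:: 1; 0] i < 2 by case=> [|[|]].
have H := def_and def_le (def_rename (sigma := fun v => nth 0 [:: 1; 0] v) def_le Hs).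
apply: def_ext H => e.
by rewrite /=; split; [case=> ? ?; apply/eqP; rewrite eqn_leq; apply/andP | move=> ->].
Qed.

Inductive form :=
| FAdd of nat & nat & nat
| FLe of nat & nat
| FLt of nat & nat
| FEq of nat & nat
| FSame of nat & nat
| FTrue | FFalse
| FNot of form
| FAnd of form & form
| FOr of form & form
| FImp of form & form
| FEx of nat & form
| FAll of nat & form.

Fixpoint eval (f : form) (e : nat -> nat) : Prop :=
  match f with
  | FAdd x y z => e x + e y = e z
  | FLe x y => e x <= e y
  | FLt x y => e x < e y
  | FEq x y => e x = e y
  | FSame x y => s (e x) = s (e y)
  | FTrue => True
  | FFalse => False
  | FNot f => ~ eval f e
  | FAnd f g => eval f e /\ eval g e
  | FOr f g => eval f e \/ eval g e
  | FImp f g => eval f e -> eval g e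
  | FEx x f => exists y, eval f (upd e x y)
  | FAll x f => forall y, eval f (upd e x y)
  end.

Lemma def_bin2 (P : (nat -> nat) -> Prop) x y :
  definable 2 P -> exists K, definable K (fun e => P (fun v => e (nth 0 [:: x; y] v))).
Proof.
move=> H; exists (maxn x y).+1; apply: (def_rename H) => -[|[|]] //= _; lia.
Qed.

Theorem def_form f : exists K, definable K (eval f).
Proof.
elim: f.
- move=> x y z; exists (maxn x (maxn y z)).+1.
  apply: (def_rename (sigma := fun v => nth 0 [:: x; y; z] v) def_add) => -[|[|[|]]] //= _; lia.
- by move=> x y; exact: def_bin2 def_le.
- by move=> x y; exact: def_bin2 def_lt.
- by move=> x y; exact: def_bin2 def_eq.
- by move=> x y; exact: def_bin2 def_same.
- by exists 0; exact: def_true.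
- by exists 0; exact: def_false.
- by move=> f [K H]; exists K; exact: def_not.
- move=> f [K1 H1] g [K2 H2]; exists (maxn K1 K2).
  by apply: def_and; [apply: (def_mono H1) | apply: (def_mono H2)]; lia.
- move=> f [K1 H1] g [K2 H2]; exists (maxn K1 K2).
  by apply: def_or; [apply: (def_mono H1) | apply: (def_mono H2)]; lia.
- move=> f [K1 H1] g [K2 H2]; exists (maxn K1 K2).
  have H := def_not (def_and (def_mono H1 (leq_maxl K1 K2))
                     (def_not (def_mono H2 (leq_maxr K1 K2)))).
  apply: def_ext H => e /=; split; first by move=> Hn Hf; apply: NNPP => Hg; apply: Hn.
  by move=> Hi [Hf Hg]; apply: Hg; apply: Hi.
- move=> x f [K [HP HL]].
  set K' := maxn K x.+1.
  pose sigma v := if v == x then K' else v.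
  have HR := def_rename (sigma := sigma) (conj HP HL) (k' := K'.+1).
  have HE := def_ex (HR _).
  exists K'; apply: def_ext (HE _) => [e|]; last first.
    by move=> i Hi; rewrite /sigma; case: eqP => _; lia.
  rewrite /=; split; case=> y Hy; exists y; apply: (HP _ _ _ Hy) => i Hi;
    rewrite /upd /sigma /=; case: (i =P x) => Hix; (try by subst i; rewrite !eqxx);
    rewrite ifN //; apply/eqP; lia.
- move=> x f [K [HP HL]].
  set K' := maxn K x.+1.
  pose sigma v := if v == x then K' else v.
  have HR := def_rename (sigma := sigma) (def_not (conj HP HL)) (k' := K'.+1).
  have HE := def_not (def_ex (HR _)).
  exists K'; apply: def_ext (HE _) => [e|]; last first.
    by move=> i Hi; rewrite /sigma; case: eqP => _; lia.
  have Eq : forall y, eval f (fun v => upd e K' y (sigma v)) <-> eval f (upd e x y).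
    move=> y; split => Hy; apply: (HP _ _ _ Hy) => i Hi;
      rewrite /upd /sigma /=; case: (i =P x) => Hix; (try by subst i; rewrite !eqxx);
      rewrite ifN //; apply/eqP; lia.
  rewrite /=; split.
    move=> Hn y; apply/Eq; apply: NNPP => Hy; apply: Hn; exists y; exact: Hy.
  by move=> Ha [y Hy]; apply: Hy; apply/Eq; apply: Ha.
Qed.

End Atoms.

Section BigMin.
Variable I : finType.
Variables (P : pred I) (F : I -> nat) (x0 : nat).

Lemma bigmin_le i : P i -> \big[minn/x0]_(j | P j) F j <= F i.
Proof.
move=> Pi; have : i \in index_enum I by rewrite mem_index_enum.
elim: (index_enum I) => // j r IH; rewrite inE big_cons => /orP[/eqP<-|Hr].
  by rewrite Pi geq_minl.
by case: (P j); rewrite ?geq_min IH ?orbT.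
Qed.

Lemma bigmin_le0 : \big[minn/x0]_(j | P j) F j <= x0.
Proof. by elim/big_rec: _ => // i x Pi Hx; rewrite geq_min Hx orbT. Qed.

Lemma bigmin_cases : \big[minn/x0]_(j | P j) F j = x0 \/
                     exists2 i, P i & \big[minn/x0]_(j | P j) F j = F i.
Proof.
elim/big_rec: _ => [|i x Pi [->|[j Pj ->]]]; first by left.
  by case: (leqP (F i) x0) => H; [right; exists i => //| left]; lia.
by case: (leqP (F i) (F j)) => H; right; [exists i | exists j] => //; lia.
Qed.

Lemma bigmin_attained i0 : P i0 -> F i0 < x0 ->
  exists2 i, P i & \big[minn/x0]_(j | P j) F j = F i.
Proof.
move=> Pi0 Hi0; case: bigmin_cases => // H.
by have := bigmin_le Pi0; rewrite H; lia.
Qed.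

Lemma bigmax_attained i0 : P i0 -> exists2 i, P i & \max_(j | P j) F j = F i.
Proof.
move=> Pi0.
have : \max_(j | P j) F j = 0 \/ exists2 i, P i & \max_(j | P j) F j = F i.
  elim/big_rec: _ => [|i x Pi [->|[j Pj ->]]]; first by left.
    by right; exists i => //; rewrite maxn0.
  by case: (leqP (F i) (F j)) => H; right; [exists j | exists i] => //; lia.
case=> // H; exists i0 => //; have := @leq_bigmax_cond _ _ F _ Pi0; rewrite H; lia.
Qed.
End BigMin.

Section Math.
Variable Delta : finType.
Variable s : nat -> Delta.

Definition CovS n (xs : seq nat) := forall p q, p <= q -> q < n ->
  exists p' q', [/\ p' <= q', q' < n, q - p = q' - p',
     (forall t, p + t <= q -> s (p + t) = s (p' + t)) &
     exists2 x, x \in xs & (p' <= x) && (x <= q')].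

Lemma CovS_mono n xs ys : CovS n xs ->
  (forall x, x \in xs -> x < n -> x \in ys) -> CovS n ys.
Proof.
move=> H Hs p q Hpq Hqn; case: (H p q Hpq Hqn) => p' [q' [H1 H2 H3 H4 [x Hx /andP[H5 H6]]]].
exists p', q'; split => //; exists x; [apply: Hs => //; lia | by rewrite H5 H6].
Qed.

Lemma size_pref n : size (seq_prefix s n) = n.
Proof. exact: size_mkseq. Qed.

Lemma ord_pref n (i : 'I_(size (seq_prefix s n))) : val i < n.
Proof. by have := ltn_ord i; rewrite [X in _ < X]size_pref. Qed.

Lemma mkseq_eqP (T : Type) (f g : nat -> T) a b :
  mkseq f a = mkseq g b <-> a = b /\ forall t, t < a -> f t = g t.
Proof.
split.
  move=> H; have Hab : a = b by have := congr1 size H; rewrite !size_mkseq.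
  split => // t Ht; have := congr1 (fun u => nth (f 0) u t) H.
  by rewrite !nth_mkseq // -Hab.
case=> <- H; apply: (eq_from_nth (x0 := f 0)); rewrite !size_mkseq // => t Ht.
by rewrite !nth_mkseq // H.
Qed.

Lemma factor_pref n p q : p <= q -> q < n ->
  factor (seq_prefix s n) p q = mkseq (fun t => s (p + t)) (q - p).+1.
Proof.
move=> Hpq Hqn; rewrite /factor.
apply: (eq_from_nth (x0 := s 0)).
  by rewrite size_takel ?size_mkseq // size_drop size_pref; lia.
move=> t; rewrite size_takel ?size_drop ?size_pref; last lia.
move=> Ht; rewrite nth_take // nth_drop /seq_prefix !nth_mkseq //; lia.
Qed.

Lemma attrP n (S : {set 'I_(size (seq_prefix s n))}) :
  attractor (seq_prefix s n) S <-> CovS n [seq val i | i <- enum S].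
Proof.
have sw := size_pref n.
split.
  move=> /forallP H p q Hpq Hqn.
  have Hp : p < size (seq_prefix s n) by rewrite sw; lia.
  have Hq : q < size (seq_prefix s n) by rewrite sw; lia.
  move: (H (Ordinal Hp)) => /forallP /(_ (Ordinal Hq)) /implyP /(_ Hpq).
  case/existsP => p' /existsP [q' /and3P [Hpq' /eqP Hf /existsP [i /andP [Hi /andP [H1 H2]]]]].
  have Hq'n : q' < n by exact: ord_pref.
  move: Hf; rewrite !factor_pref // => /mkseq_eqP [Hl Hpt].
  simpl in Hl, Hpt; case: Hl => Hl; exists p', q'; split => //.
    by move=> t Ht; symmetry; apply: Hpt; rewrite Hl; lia.
  by exists (val i); [apply: map_f; rewrite mem_enum | rewrite H1 H2].
move=> H; apply/forallP => p; apply/forallP => q; apply/implyP => Hpq.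
have Hqn : q < n by exact: ord_pref.
case: (H p q Hpq Hqn) => p' [q' [H1 H2 H3 H4 [x Hx H5]]].
have Hp' : p' < size (seq_prefix s n) by rewrite sw; lia.
have Hq' : q' < size (seq_prefix s n) by rewrite sw; lia.
apply/existsP; exists (Ordinal Hp'); apply/existsP; exists (Ordinal Hq'); rewrite /= H1 /=.
apply/andP; split.
  apply/eqP; rewrite !factor_pref //; apply/mkseq_eqP; split; first by rewrite /= H3.
  move=> t Ht /=; rewrite H4 //; lia.
case/mapP: Hx => i; rewrite mem_enum => Hi Hxi.
by apply/existsP; exists i; rewrite Hi -Hxi.
Qed.

Lemma attractorT (T : eqType) (w : seq T) : attractor w setT.
Proof.
apply/forallP => p; apply/forallP => q; apply/implyP => Hpq.
apply/existsP; exists p; apply/existsP; exists q; rewrite Hpq eqxx /=.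
by apply/existsP; exists p; rewrite inE leqnn Hpq.
Qed.

Lemma min_card_le (T : eqType) (w : seq T) k :
  min_attr_card w <= k <-> exists S, attractor w S /\ #|S| <= k.
Proof.
split.
  rewrite /min_attr_card; case: (bigmin_cases (fun S : {set 'I_(size w)} => attractor w S) (fun S => #|S|) (size w)) => [->|[S HS ->]] Hk.
    by exists setT; rewrite attractorT cardsT card_ord.
  by exists S.
case=> S [HS Hk]; apply: leq_trans Hk; exact: bigmin_le.
Qed.

Lemma min_card_min (T : eqType) (w : seq T) S : attractor w S -> min_attr_card w <= #|S|.
Proof. exact: bigmin_le. Qed.

Definition AttS n k := exists xs, [/\ size xs = k, all (fun x => x < n) xs & CovS n xs].

Lemma att_card n k : 0 < n ->
  (min_attr_card (seq_prefix s n) <= k) <-> AttS n k.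
Proof.
move=> Hn; have sw := size_pref n; rewrite min_card_le; split.
  case=> S [/attrP HS Hk].
  exists ([seq val i | i <- enum S] ++ nseq (k - #|S|) 0); split.
  - by rewrite size_cat size_map size_nseq -cardE subnKC.
  - rewrite all_cat; apply/andP; split.
      by apply/allP => x /mapP [i _ ->]; exact: ord_pref.
    by apply/allP => x; rewrite mem_nseq => /andP[_ /eqP->].
  - by apply: (CovS_mono HS) => x Hx _; rewrite mem_cat Hx.
case=> xs [Hs Ha Hc].
exists [set i : 'I_(size (seq_prefix s n)) | val i \in xs]; split.
  apply/attrP; apply: (CovS_mono Hc) => x Hx Hxn.
  have Hx' : x < size (seq_prefix s n) by rewrite sw.
  by apply/mapP; exists (Ordinal Hx'); rewrite // mem_enum inE.
rewrite cardE -Hs -(size_map val); apply: uniq_leq_size.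
  by rewrite map_inj_uniq ?enum_uniq //; exact: val_inj.
by move=> x /mapP [i]; rewrite mem_enum inE => Hi ->.
Qed.

Definition SpanS n k d := exists xs, [/\ size xs = k, uniq xs, all (fun x => x < n) xs,
  CovS n xs & exists a b, [/\ a \in xs, b \in xs,
                             (forall x, x \in xs -> b <= x <= a) & a = b + d]].

Lemma arith1 (a b a0 b0 d : nat) : b <= a0 <= a -> b <= b0 <= a -> a <= a0 -> b0 <= b ->
  a = b + d -> a0 - b0 = d.
Proof. lia. Qed.

Lemma spanP m (S : {set 'I_m}) d : S != set0 ->
  span S = d <-> exists a b, [/\ a \in S, b \in S,
      (forall x, x \in S -> b <= x <= a) & val a = val b + d].
Proof.
case/set0Pn => i0 Hi0.
have [a0 Ha0 Hmax] := bigmax_attained (fun i : 'I_m => val i) Hi0.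
have Hm : val i0 < m by exact: ltn_ord.
have [b0 Hb0 Hmin] := @bigmin_attained _ _ (fun i : 'I_m => val i) m _ Hi0 Hm.
have Ha : forall x, x \in S -> val x <= val a0.
  by move=> x Hx; rewrite -Hmax; exact: (@leq_bigmax_cond _ _ (fun i : 'I_m => val i) _ Hx).
have Hb : forall x, x \in S -> val b0 <= val x.
  by move=> x Hx; rewrite -Hmin; exact: bigmin_le.
rewrite /span Hmax Hmin; split.
  move=> <-; exists a0, b0; split => //.
    by move=> x Hx; apply/andP; split; [exact: Hb | exact: Ha].
  by rewrite subnKC //; exact: Hb.
case=> a [b [Ha' Hb' Hab Had]].
exact: (arith1 (Hab _ Ha0) (Hab _ Hb0) (Ha _ Ha') (Hb _ Hb') Had).
Qed.

Lemma span_lt m (S : {set 'I_m}) : 0 < m -> span S < m.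
Proof.
move=> Hm; rewrite /span.
have : \max_(i in S) val i <= m.-1 by apply/bigmax_leqP => i _; rewrite -ltnS prednK //; exact: ltn_ord.
lia.
Qed.

Lemma span_min n d : 0 < n ->
  (exists S, min_attractor (seq_prefix s n) S /\ span S = d) <->
  SpanS n (min_attr_card (seq_prefix s n)) d.
Proof.
move=> Hn; have sw := size_pref n; split.
  case=> S [/andP [HS /eqP Hc] Hsp].
  have HC := HS; move/attrP: HC => HC.
  have Sn0 : S != set0.
    apply/negP => /eqP S0; move: HC; rewrite S0 enum_set0 /= => HC.
    by case: (HC 0 0 (leqnn 0) Hn) => p' [q' [_ _ _ _ [x]]].
  move/(spanP d Sn0): Hsp => [a [b [Ha Hb Hab Had]]].
  exists [seq val i | i <- enum S]; split => //.
  - by rewrite size_map -cardE.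
  - by rewrite map_inj_uniq ?enum_uniq //; exact: val_inj.
  - by apply/allP => x /mapP [i _ ->]; exact: ord_pref.
  - exists (val a), (val b); split => //.
    + by apply: map_f; rewrite mem_enum.
    + by apply: map_f; rewrite mem_enum.
    + by move=> x /mapP [i]; rewrite mem_enum => Hi ->; apply: Hab.
case=> xs [Hs Hu Ha Hc [a [b [Hax Hbx Hab Had]]]].
have Hord : forall x, x \in xs -> x < size (seq_prefix s n).
  by move=> x Hx; rewrite sw; move/allP: Ha => /(_ x Hx).
pose S := [set i : 'I_(size (seq_prefix s n)) | val i \in xs].
have HS : [seq val i | i <- enum S] =i xs.
  move=> x; apply/mapP/idP.
    by case=> i; rewrite mem_enum inE => Hi ->.
  by move=> Hx; exists (Ordinal (Hord x Hx)); rewrite // mem_enum inE.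
exists S; split.
  apply/andP; split.
    by apply/attrP; apply: (CovS_mono Hc) => x Hx _; rewrite HS.
  rewrite -Hs cardE -(size_map val); apply/eqP; apply: perm_size; apply: uniq_perm => //.
  by rewrite map_inj_uniq ?enum_uniq //; exact: val_inj.
have Sn0 : S != set0 by apply/set0Pn; exists (Ordinal (Hord a Hax)); rewrite inE.
apply/(spanP d Sn0); exists (Ordinal (Hord a Hax)), (Ordinal (Hord b Hbx)); split => //=.
- by rewrite inE.
- by rewrite inE.
- by move=> x; rewrite inE => /Hab.
Qed.

Lemma exists_minattr n : exists S, min_attractor (seq_prefix s n) S.
Proof.
have [S [HS Hc]] : exists S, attractor (seq_prefix s n) S /\
    #|S| <= min_attr_card (seq_prefix s n) by apply/min_card_le.
exists S; rewrite /min_attractor HS eqn_leq Hc /=; exact: min_card_min.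
Qed.

Lemma maxspanP n d : 0 < n ->
  maxspan (seq_prefix s n) = d <->
  SpanS n (min_attr_card (seq_prefix s n)) d /\
  forall d', SpanS n (min_attr_card (seq_prefix s n)) d' -> d' <= d.
Proof.
move=> Hn; have [S0 HS0] := exists_minattr n.
have [S1 HS1 Hm] := @bigmax_attained _ _ (fun S => span S) _ HS0.
have Hle : forall d', SpanS n (min_attr_card (seq_prefix s n)) d' ->
   d' <= maxspan (seq_prefix s n).
  move=> d' /(span_min _ Hn) [S [HS <-]]; exact: leq_bigmax_cond.
have Hsp : SpanS n (min_attr_card (seq_prefix s n)) (maxspan (seq_prefix s n)).
  by apply/(span_min _ Hn); exists S1; rewrite /maxspan Hm.
split; first by move=> <-.
case=> Hd Hall; apply/eqP; rewrite eqn_leq; apply/andP; split; [exact: Hall Hsp | exact: Hle].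
Qed.

Lemma minspanP n d : 0 < n ->
  minspan (seq_prefix s n) = d <->
  SpanS n (min_attr_card (seq_prefix s n)) d /\
  forall d', SpanS n (min_attr_card (seq_prefix s n)) d' -> d <= d'.
Proof.
move=> Hn; have [S0 HS0] := exists_minattr n.
have Hlt : span S0 < size (seq_prefix s n) by apply: span_lt; rewrite size_pref.
have [S1 HS1 Hm] := @bigmin_attained _ _ (fun S => span S) _ _ HS0 Hlt.
have Hle : forall d', SpanS n (min_attr_card (seq_prefix s n)) d' ->
   minspan (seq_prefix s n) <= d'.
  move=> d' /(span_min _ Hn) [S [HS <-]]; exact: bigmin_le.
have Hsp : SpanS n (min_attr_card (seq_prefix s n)) (minspan (seq_prefix s n)).
  by apply/(span_min _ Hn); exists S1; rewrite /minspan Hm.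
split; first by move=> <-.
case=> Hd Hall; apply/eqP; rewrite eqn_leq; apply/andP; split; [exact: Hle | exact: Hall Hsp].
Qed.

Lemma span0 (S : {set 'I_0}) : span S = 0.
Proof. rewrite /span; have : \max_(i in S) val i <= 0 by apply/bigmax_leqP => -[]. lia. Qed.

Lemma maxspan0 : maxspan (seq_prefix s 0) = 0.
Proof. by rewrite /maxspan big1 // => S _; exact: span0. Qed.

Lemma minspan0 : minspan (seq_prefix s 0) = 0.
Proof. apply/eqP; rewrite -leqn0; exact: bigmin_le0. Qed.

End Math.      

Section Formulas.
Variable Delta : finType.
Variable s : nat -> Delta.
Local Notation ev := (eval s).

Definition xv j := 10 + j.
Fixpoint exs k f := if k is k'.+1 then FEx (xv k') (exs k' f) else f.
Definition bAnd l := foldr FAnd FTrue l.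
Definition bOr l := foldr FOr FFalse l.
Definition updl (e : nat -> nat) (xs : seq nat) : nat -> nat :=
  fun v => if (10 <= v) && (v - 10 < size xs) then nth 0 xs (v - 10) else e v.

Lemma mem_iota0 j k : (j \in iota 0 k) = (j < k).
Proof. by rewrite mem_iota add0n. Qed.

Lemma eval_bAnd (F : nat -> form) l e :
  ev (bAnd (map F l)) e <-> (forall x, x \in l -> ev (F x) e).
Proof.
elim: l => [|a l IH] /=; first by split.
rewrite IH; split.
  by case=> Ha Hl x; rewrite inE => /orP[/eqP->|/Hl].
by move=> H; split => [|x Hx]; apply: H; rewrite inE ?eqxx ?Hx ?orbT.
Qed.

Lemma eval_bOr (F : nat -> form) l e :
  ev (bOr (map F l)) e <-> (exists2 x, x \in l & ev (F x) e).
Proof.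
elim: l => [|a l IH] /=; first by split => // -[].
rewrite IH; split.
  by case=> [Ha|[x Hx Hl]]; [exists a; rewrite ?inE ?eqxx | exists x; rewrite // inE Hx orbT].
by case=> x; rewrite inE => /orP[/eqP->|Hx] H; [left | right; exists x].
Qed.

Lemma eval_exs k f e :
  ev (exs k f) e <-> exists xs, size xs = k /\ ev f (updl e xs).
Proof.
elim: k e => [|k IH] e /=.
  have E : updl e [::] = e.
    by apply: functional_extensionality => v; rewrite /updl /=; case: (10 <= v).
  split; first by move=> H; exists [::]; rewrite E.
  by case=> xs [Hs H]; case: xs Hs H => // _; rewrite E.
have E : forall xs y, size xs = k -> updl (upd e (xv k) y) xs = updl e (rcons xs y).
  move=> xs y Hs; apply: functional_extensionality => v; rewrite /updl /upd /xv size_rcons Hs.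
  case: (leqP 10 v) => Hv /=; last by case: eqP => // ?; lia.
  case: (ltngtP (v - 10) k) => Hk.
  - by rewrite ltnS ltnW // nth_rcons Hs Hk.
  - by rewrite ltnS leqNgt Hk /=; case: eqP => // ?; lia.
  - by rewrite Hk ltnSn nth_rcons Hs ltnn eqxx; case: eqP => // ?; lia.
split.
  case=> y /IH [xs [Hs H]]; exists (rcons xs y); rewrite size_rcons Hs -E //.
case=> xs' [Hs H]; case/lastP: xs' Hs H => [//|xs y]; rewrite size_rcons => -[Hs] H.
by exists y; apply/IH; exists xs; rewrite E.
Qed.

Lemma updl_xv e xs j : j < size xs -> updl e xs (xv j) = nth 0 xs j.
Proof. by move=> Hj; rewrite /updl /xv leq_addr /= addKn Hj. Qed.

Lemma upd_xv e x y j : x < 10 -> upd e x y (xv j) = e (xv j).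
Proof. by move=> Hx; rewrite /upd /xv; case: eqP => // ?; lia. Qed.

Definition HitF k := bOr (map (fun j => FAnd (FLe 5 (xv j)) (FLe (xv j) 6)) (iota 0 k)).

Lemma eval_HitF xs env : (forall j, j < size xs -> env (xv j) = nth 0 xs j) ->
  ev (HitF (size xs)) env <-> exists2 x, x \in xs & (env 5 <= x) && (x <= env 6).
Proof.
move=> Henv; rewrite eval_bOr; split.
  case=> j; rewrite mem_iota0 => Hj [H1 H2].
  by exists (nth 0 xs j); [exact: mem_nth | rewrite -Henv // H1 H2].
case=> x Hx /andP[H1 H2]; exists (index x xs); first by rewrite mem_iota0 index_mem.
by rewrite /= Henv ?index_mem // nth_index.
Qed.

Definition CovF k :=
  FAll 3 (FAll 4 (FImp (FAnd (FLe 3 4) (FLt 4 0))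
   (FEx 5 (FEx 6 (FAnd (FLe 5 6) (FAnd (FLt 6 0)
     (FAnd (FEx 7 (FAnd (FAdd 3 7 4) (FAdd 5 7 6)))
     (FAnd (FAll 7 (FAll 8 (FAll 9 (FImp (FAnd (FAdd 3 7 8) (FAnd (FAdd 5 7 9) (FLe 8 4)))
                                         (FSame 8 9)))))
           (HitF k))))))))).

Lemma eval_CovF e xs : ev (CovF (size xs)) (updl e xs) <-> CovS s (e 0) xs.
Proof.
have Hx : forall env (p q p' q' : nat), (forall j, j < size xs -> env (xv j) = nth 0 xs j) ->
   forall j, j < size xs ->
   upd (upd (upd (upd env 3 p) 4 q) 5 p') 6 q' (xv j) = nth 0 xs j.
  by move=> env p q p' q' H j Hj; rewrite !upd_xv //; exact: H.
have H0 : forall j, j < size xs -> updl e xs (xv j) = nth 0 xs j.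
  by move=> j Hj; rewrite updl_xv.
rewrite /CovF /=; split.
  move=> H p q Hpq Hqn.
  have [|p' [q' [H1 [H2 [[d [Hd1 Hd2]] [H3 H4]]]]]] := H p q.
    by rewrite /upd /=; split.
  move: H1 H2 Hd1 Hd2 H3; rewrite /upd /= => H1 H2 Hd1 Hd2 H3.
  move/(eval_HitF (Hx _ p q p' q' H0)): H4; rewrite /upd /= => H4.
  exists p', q'; split => //; first lia.
  move=> t Ht; apply: H3; split => //; lia.
move=> H p q [Hpq Hqn]; move: Hpq Hqn; rewrite /upd /= => Hpq Hqn.
case: (H p q Hpq Hqn) => p' [q' [H1 H2 H3 H4 H5]].
exists p', q'; rewrite /upd /=; split => //; split => //; split.
  by exists (q - p); lia.
split.
  by move=> t u v [Hu [Hv Huq]]; rewrite -Hu -Hv; apply: H4; lia.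
apply/(eval_HitF (Hx _ p q p' q' H0)); rewrite /upd /=; exact: H5.
Qed.

Definition LtAll k := bAnd (map (fun j => FLt (xv j) 0) (iota 0 k)).

Lemma eval_LtAll e xs : ev (LtAll (size xs)) (updl e xs) <-> all (fun x => x < e 0) xs.
Proof.
rewrite eval_bAnd; split.
  move=> H; apply/(all_nthP 0) => j Hj; move: (H j); rewrite mem_iota0 /= updl_xv //.
  exact.
move=> /(all_nthP 0) H j; rewrite mem_iota0 /= => Hj; rewrite updl_xv //; exact: H.
Qed.

Definition AttF k := exs k (FAnd (LtAll k) (CovF k)).

Lemma eval_AttF k e : ev (AttF k) e <-> AttS s (e 0) k.
Proof.
rewrite eval_exs; split.
  case=> xs [Hs [H1 H2]]; exists xs; rewrite -Hs in H1 H2.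
  by split => //; [apply/eval_LtAll | apply/eval_CovF].
case=> xs [Hs H1 H2]; exists xs; split => //; rewrite -Hs; split.
  exact/eval_LtAll.
exact/eval_CovF.
Qed.

Definition UniqF k := bAnd (map (fun i => bAnd (map (fun j =>
   if i < j then FNot (FEq (xv i) (xv j)) else FTrue) (iota 0 k))) (iota 0 k)).

Lemma eval_UniqF e xs : ev (UniqF (size xs)) (updl e xs) <-> uniq xs.
Proof.
rewrite eval_bAnd; split.
  move=> H; apply/(uniqP 0) => i j; rewrite !inE => Hi Hj Hij.
  case: (ltngtP i j) => // Hlt; move: (H i); rewrite mem_iota0 => /(_ Hi) /eval_bAnd /(_ j).
    by rewrite mem_iota0 Hlt /= !updl_xv // => /(_ Hj).
  move: (H j); rewrite mem_iota0 => /(_ Hj) /eval_bAnd /(_ i).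
  by rewrite mem_iota0 Hlt /= !updl_xv // => /(_ Hi) => K; exfalso; apply: K.
move=> /(uniqP 0) Hu i; rewrite mem_iota0 => Hi; apply/eval_bAnd => j.
rewrite mem_iota0 => Hj; case: ifP => //= Hij; rewrite !updl_xv // => E.
by have := Hu i j Hi Hj E; lia.
Qed.

Definition MinMaxF k dv := bOr (map (fun a => bOr (map (fun b =>
   FAnd (bAnd (map (fun j => FAnd (FLe (xv b) (xv j)) (FLe (xv j) (xv a))) (iota 0 k)))
        (FAdd (xv b) dv (xv a))) (iota 0 k))) (iota 0 k)).

Lemma eval_MinMaxF e xs dv : dv < 10 ->
  ev (MinMaxF (size xs) dv) (updl e xs) <->
  exists a b, [/\ a \in xs, b \in xs, (forall x, x \in xs -> b <= x <= a) & a = b + e dv].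
Proof.
move=> Hdv; have Edv : updl e xs dv = e dv by rewrite /updl; case: (leqP 10 dv) => //; lia.
rewrite eval_bOr; split.
  case=> a; rewrite mem_iota0 => Ha /eval_bOr [b]; rewrite mem_iota0 => Hb [/eval_bAnd H1 H2].
  exists (nth 0 xs a), (nth 0 xs b); split; try exact: mem_nth.
    move=> x Hx; move: (H1 (index x xs)); rewrite mem_iota0 index_mem => /(_ Hx).
    by rewrite /= !updl_xv ?index_mem // nth_index // => -[-> ->].
  by move: H2; rewrite /= !updl_xv // Edv => <-.
case=> a [b [Ha Hb Hab Hd]].
exists (index a xs); first by rewrite mem_iota0 index_mem.
apply/eval_bOr; exists (index b xs); first by rewrite mem_iota0 index_mem.
split.
  apply/eval_bAnd => j; rewrite mem_iota0 => Hj.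
  rewrite /= !updl_xv ?index_mem // !nth_index //.
  by move/andP: (Hab _ (mem_nth 0 Hj)).
by rewrite /= !updl_xv ?index_mem // !nth_index // Edv Hd.
Qed.

Definition SpanF k dv := exs k (FAnd (LtAll k) (FAnd (UniqF k) (FAnd (CovF k) (MinMaxF k dv)))).

Lemma eval_SpanF k dv e : dv < 10 -> ev (SpanF k dv) e <-> SpanS s (e 0) k (e dv).
Proof.
move=> Hdv; rewrite eval_exs; split.
  case=> xs [Hs [H1 [H2 [H3 H4]]]]; rewrite -Hs in H1 H2 H3 H4.
  exists xs; split => //; [exact: (proj1 (eval_UniqF e xs) H2) | exact: (proj1 (eval_LtAll e xs) H1) | exact: (proj1 (eval_CovF e xs) H3) |].
  exact/(eval_MinMaxF _ _ Hdv).
case=> xs [Hs H1 H2 H3 H4]; exists xs; split => //; rewrite -Hs.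
split; first exact/eval_LtAll.
split; first exact/eval_UniqF.
split; first exact/eval_CovF.
exact/(eval_MinMaxF _ _ Hdv).
Qed.

Definition FZero x := FAdd x x x.

Definition PhiBody (c : nat) (opt : form) :=
  bOr (map (fun k => FAnd (FAnd (AttF k) (bAnd (map (fun j => FNot (AttF j)) (iota 0 k))))
                          (FAnd (SpanF k 1) (FAll 2 (FImp (SpanF k 2) opt))))
           (iota 0 c.+1)).

Definition PhiGen (c : nat) (opt : form) :=
  FOr (FAnd (FZero 0) (FZero 1)) (FAnd (FNot (FZero 0)) (PhiBody c opt)).

Lemma eval_PhiGen c opt e (R : nat -> nat -> Prop) (g : nat -> nat) :
  (forall n, min_attr_card (seq_prefix s n) <= c) ->
  (forall y, ev opt (upd e 2 y) <-> R y (e 1)) ->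
  g 0 = 0 ->
  (forall n d, 0 < n -> g n = d <->
     SpanS s n (min_attr_card (seq_prefix s n)) d /\
     forall d', SpanS s n (min_attr_card (seq_prefix s n)) d' -> R d' d) ->
  ev (PhiGen c opt) e <-> e 1 = g (e 0).
Proof.
move=> Hc Hopt Hg0 Hg.
have Z : forall x, ev (FZero x) e <-> e x = 0 by move=> x /=; split; lia.
have AT : 0 < e 0 -> forall j, ev (AttF j) e <-> min_attr_card (seq_prefix s (e 0)) <= j.
  by move=> Hn j; rewrite eval_AttF att_card.
set M := min_attr_card (seq_prefix s (e 0)).
have HM : M <= c by exact: Hc.
have EB : ev (PhiBody c opt) e <-> exists2 k, k \in iota 0 c.+1 &
   ((ev (AttF k) e /\ forall j, j \in iota 0 k -> ~ ev (AttF j) e) /\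
    (ev (SpanF k 1) e /\ forall y, ev (SpanF k 2) (upd e 2 y) -> ev opt (upd e 2 y))).
  rewrite /PhiBody eval_bOr; split; case=> k Hk H; exists k => //.
    case: H => [[H1 H2] [H3 H4]]; split; split => //.
    by move=> j Hj; exact: ((eval_bAnd _ _ _).1 H2 j Hj).
  case: H => [[H1 H2] [H3 H4]]; split; split => //.
  exact/eval_bAnd.
change ((ev (FZero 0) e /\ ev (FZero 1) e) \/ (~ ev (FZero 0) e /\ ev (PhiBody c opt) e)
        <-> e 1 = g (e 0)).
rewrite EB; split.
  case=> [[/Z H0 /Z H1] | [Hn0 Hb]]; first by rewrite H0 H1 Hg0.
  have Hn : 0 < e 0 by case: (posnP (e 0)) => // H; exfalso; apply: Hn0; apply/Z.
  move: AT => /(_ Hn) AT.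
  case: Hb => k _ [[/AT HkM Hj] [/(eval_SpanF _ _ (isT : 1 < 10)) Hsp Hall]].
  have EkM : k = M.
    apply/eqP; rewrite eqn_leq HkM andbT; apply/negP => /negP; rewrite -ltnNge => Hlt.
    have := Hj M; rewrite mem_iota0 => /(_ Hlt); apply; exact/AT.
  apply/esym/Hg => //; rewrite -/M -EkM; split => // d' Hd'.
  apply/Hopt; apply: Hall; apply/(eval_SpanF _ _ (isT : 2 < 10)); exact: Hd'.
move=> He1.
case: (posnP (e 0)) => Hn.
  by left; split; apply/Z => //; rewrite He1 Hn Hg0.
move: AT => /(_ Hn) AT.
right; split; first by move/Z; lia.
exists M; first by rewrite mem_iota0 ltnS.
have [Hsp Hall] := (Hg (e 0) (e 1) Hn).1 (esym He1).
split; split.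
- exact/AT.
- move=> j; rewrite mem_iota0 => Hj /AT; rewrite -/M; lia.
- exact/(eval_SpanF _ _ (isT : 1 < 10)).
- move=> y /(eval_SpanF _ _ (isT : 2 < 10)) Hy; apply/Hopt; exact: Hall.
Qed.

End Formulas. 

Section Final.
Variable Sigma : finType.
Variable rep : nat -> seq Sigma.

Definition o20 : 'I_2 := @Ordinal 2 0 isT.
Definition o21 : 'I_2 := @Ordinal 2 1 isT.
Definition g2 (f : alph Sigma 2) := (f o20, f o21).

Lemma map_g2_enc e : map g2 (enc rep 2 e) = pad2 (rep (e 0)) (rep (e 1)).
Proof.
have -> : map g2 (enc rep 2 e) = zip (col o20 (enc rep 2 e)) (col o21 (enc rep 2 e)).
  by rewrite /col zip_map.
rewrite /enc !col_encf /pad2 /=.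
have -> : encm rep (fun i : 'I_2 => e i) = maxn (size (rep (e 0))) (size (rep (e 1))).
  by rewrite /encm !big_ord_recl big_ord0 maxn0.
by [].
Qed.

Lemma sync_of_def (f : nat -> nat) :
  definable rep 2 (fun e => e 1 = f (e 0)) -> synchronized rep f.
Proof.
case=> _ HL; rewrite /synchronized.
apply: regular_ext (regular_image g2 HL) => v; split.
  by case=> w [[e [-> He]] ->]; exists (e 0); rewrite map_g2_enc He.
case=> n ->; exists (enc rep 2 (fun v => nth 0 [:: n; f n] v)); split.
  by exists (fun v => nth 0 [:: n; f n] v).
by rewrite map_g2_enc.
Qed.
End Final.

Theorem theorem9 (Sigma Delta : finType) (rep : nat -> seq Sigma)
  (s : nat -> Delta) :
  regular_numeration_system rep ->
  automatic_wrt rep s ->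
  (exists c : nat, forall n : nat,
     exists S : {set 'I_(size (seq_prefix s n))},
       attractor (seq_prefix s n) S && (#|S| <= c)) ->
  synchronized rep (fun n => maxspan (seq_prefix s n)) /\
  synchronized rep (fun n => minspan (seq_prefix s n)).
Proof.
case=> Hinj Hreg Hadd Hauto [c Hc].
have HM : forall n, min_attr_card (seq_prefix s n) <= c.
  by move=> n; apply/min_card_le; case: (Hc n) => S /andP [H1 H2]; exists S.
have fin : forall (opt : form) (g : nat -> nat),
    (forall e, eval s (PhiGen c opt) e <-> e 1 = g (e 0)) -> synchronized rep g.
  move=> opt g Hg; apply: sync_of_def.
  have [K HK] := def_form Hinj Hreg Hadd Hauto (PhiGen c opt).
  have HK2 := def_mono Hinj Hreg HK (leq_maxl K 2).
  have HK3 := def_ext Hinj Hreg Hg HK2.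
  apply: (def_shrink Hinj Hreg (m := maxn K 2 - 2)).
    by rewrite subnKC // leq_maxr.
  by move=> e e' He; rewrite !He.
split.
  apply: (fin (FLe 2 1)) => e.
  apply: (@eval_PhiGen _ s c (FLe 2 1) e (fun a b => a <= b) (fun n => maxspan (seq_prefix s n))).
  - exact: HM.
  - by move=> y.
  - exact: maxspan0.
  - by move=> n d Hn; apply: maxspanP.
apply: (fin (FLe 1 2)) => e.
apply: (@eval_PhiGen _ s c (FLe 1 2) e (fun a b => b <= a) (fun n => minspan (seq_prefix s n))).
- exact: HM.
- by move=> y.
- exact: minspan0.
- by move=> n d Hn; apply: minspanP.
Qed.
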